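(* Let $\pi_2$ be the five-dimensional complex associative algebra with basis $e_1,\dots,e_5$ and nonzero products $e_1e_1=e_2$, $e_1e_2=e_2e_1=e_3$, $e_1e_4=e_4e_1=e_5$, $e_4e_4=e_5$ (all other products of basis elements are zero). The vector space $LocDer(\pi_2)$ of all local derivations of $\pi_2$ is a Lie algebra with respect to the bracket $[\nabla,\Delta]=\nabla\Delta-\Delta\nabla$; that is, $[\nabla,\Delta]\in LocDer(\pi_2)$ for all $\nabla,\Delta\in LocDer(\pi_2)$.
   Context: A derivation of an algebra $A$ is a linear map $D$ with $D(xy)=D(x)y+xD(y)$ for all $x,y\in A$. A linear map $\nabla:A\to A$ is a local derivation if for every $x\in A$ there is a derivation $D_x$ of $A$ (depending on $x$) with $\nabla(x)=D_x(x)$. *)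

(* Defs.v *)
(* The complex field is modelled as (complex R) = R[i] from
   mathcomp-real-closed, with R = Stdlib's real numbers (a realType, hence an
   rcfType, via Rstruct). *)
From HB Require Import structures.
From mathcomp Require Import all_boot all_order all_algebra.
From mathcomp Require Import complex.
From mathcomp Require Import Rstruct.
Set Implicit Arguments. Unset Strict Implicit. Unset Printing Implicit Defensive.
Import Order.TTheory GRing.Theory Num.Theory.
Local Open Scope ring_scope.

Definition CC : fieldType := complex Rdefinitions.R.

(* The i-th standard basis vector of F^5 (0-indexed: e_{k+1} of the paper is
   basis_vec k). *)
Definition basis_vec (F : nzRingType) (k : nat) : 'rV[F]_5 :=
  \row_(l < 5) (nat_of_ord l == k)%:R.

Definition pi2_tab (F : nzRingType) (i j : 'I_5) : 'rV[F]_5 :=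
  match nat_of_ord i, nat_of_ord j with
  | 0, 0 => basis_vec F 1
  | 0, 1 | 1, 0 => basis_vec F 2
  | 0, 3 | 3, 0 => basis_vec F 4
  | 3, 3 => basis_vec F 4
  | _, _ => 0
  end.

Definition pi2_mul (F : nzRingType) (x y : 'rV[F]_5) : 'rV[F]_5 :=
  \sum_(i < 5) \sum_(j < 5) (x 0 i * y 0 j) *: pi2_tab F i j.

Definition is_linear_map (F : nzRingType) (f : 'rV[F]_5 -> 'rV[F]_5) : Prop :=
  forall (a : F) (x y : 'rV[F]_5), f (a *: x + y) = a *: f x + f y.

Definition is_derivation (F : nzRingType) (D : 'rV[F]_5 -> 'rV[F]_5) : Prop :=
  is_linear_map D /\
  forall x y, D (pi2_mul x y) = pi2_mul (D x) y + pi2_mul x (D y).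

Definition is_local_derivation (F : nzRingType) (N : 'rV[F]_5 -> 'rV[F]_5) : Prop :=
  is_linear_map N /\
  forall x, exists D, is_derivation D /\ N x = D x.

Definition bracket (F : nzRingType) (N M : 'rV[F]_5 -> 'rV[F]_5) : 'rV[F]_5 -> 'rV[F]_5 :=
  fun x => N (M x) - M (N x).

(* Main.v *)
Require Import Defs.
From mathcomp Require Import all_boot all_order all_algebra.
From mathcomp Require Import complex.
From mathcomp Require Import Rstruct.
From mathcomp Require Import ring lra.
Set Implicit Arguments. Unset Strict Implicit. Unset Printing Implicit Defensive.
Import Order.TTheory GRing.Theory Num.Theory.
Local Open Scope ring_scope.

Definition i0 : 'I_5 := @Ordinal 5 0 isT.
Definition i1 : 'I_5 := @Ordinal 5 1 isT.
Definition i2 : 'I_5 := @Ordinal 5 2 isT.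
Definition i3 : 'I_5 := @Ordinal 5 3 isT.
Definition i4 : 'I_5 := @Ordinal 5 4 isT.

Definition mk5 (a b c d e : CC) : 'rV[CC]_5 := \row_(j < 5) [:: a; b; c; d; e]`_j.

Lemma eq5 (v w : 'rV[CC]_5) : v 0 i0 = w 0 i0 -> v 0 i1 = w 0 i1 -> v 0 i2 = w 0 i2 ->
  v 0 i3 = w 0 i3 -> v 0 i4 = w 0 i4 -> v = w.
Proof.
move=> H0 H1 H2 H3 H4; apply/rowP => -[[|[|[|[|[|k]]]]] Hk] //.
- by have -> : Ordinal Hk = i0 by apply: val_inj.
- by have -> : Ordinal Hk = i1 by apply: val_inj.
- by have -> : Ordinal Hk = i2 by apply: val_inj.
- by have -> : Ordinal Hk = i3 by apply: val_inj.
- by have -> : Ordinal Hk = i4 by apply: val_inj.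
Qed.

Lemma mk5E a b c d e :
  [/\ (mk5 a b c d e) 0 i0 = a, (mk5 a b c d e) 0 i1 = b, (mk5 a b c d e) 0 i2 = c,
      (mk5 a b c d e) 0 i3 = d & (mk5 a b c d e) 0 i4 = e].
Proof. by rewrite !mxE. Qed.

Lemma mk5_0 a b c d e : (mk5 a b c d e) 0 i0 = a. Proof. by rewrite mxE. Qed.
Lemma mk5_1 a b c d e : (mk5 a b c d e) 0 i1 = b. Proof. by rewrite mxE. Qed.
Lemma mk5_2 a b c d e : (mk5 a b c d e) 0 i2 = c. Proof. by rewrite mxE. Qed.
Lemma mk5_3 a b c d e : (mk5 a b c d e) 0 i3 = d. Proof. by rewrite mxE. Qed.
Lemma mk5_4 a b c d e : (mk5 a b c d e) 0 i4 = e. Proof. by rewrite mxE. Qed.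

Lemma eta5 (v : 'rV[CC]_5) : v = mk5 (v 0 i0) (v 0 i1) (v 0 i2) (v 0 i3) (v 0 i4).
Proof. by apply: eq5; rewrite mxE. Qed.

Lemma comp_sum (I : Type) (r : seq I) (F : I -> 'rV[CC]_5) k :
  (\sum_(i <- r) F i) 0 k = \sum_(i <- r) F i 0 k.
Proof. elim: r => [|a r IH]; rewrite ?big_nil ?big_cons ?mxE //. by rewrite IH. Qed.

Definition tabn (i j k : nat) : bool :=
  match i, j with
  | 0, 0 => k == 1
  | 0, 1 | 1, 0 => k == 2
  | 0, 3 | 3, 0 | 3, 3 => k == 4
  | _, _ => false
  end%N.

Lemma tabE (i j k : 'I_5) : pi2_tab CC i j 0 k = (tabn i j k)%:R.
Proof.
rewrite /pi2_tab; case: i => [[|[|[|[|[|?]]]]] ?] //; case: j => [[|[|[|[|[|?]]]]] ?] //=;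
  by rewrite !mxE.
Qed.

Lemma l0 : (ord0 : 'I_5) = i0. Proof. exact: val_inj. Qed.
Lemma l1 : (lift ord0 ord0 : 'I_5) = i1. Proof. exact: val_inj. Qed.
Lemma l2 : (lift ord0 (lift ord0 ord0) : 'I_5) = i2. Proof. exact: val_inj. Qed.
Lemma l3 : (lift ord0 (lift ord0 (lift ord0 ord0)) : 'I_5) = i3. Proof. exact: val_inj. Qed.
Lemma l4 : (lift ord0 (lift ord0 (lift ord0 (lift ord0 ord0))) : 'I_5) = i4. Proof. exact: val_inj. Qed.

Lemma pi2_mulE x y : pi2_mul x y = mk5 0 (x 0 i0 * y 0 i0)
  (x 0 i0 * y 0 i1 + x 0 i1 * y 0 i0) 0
  (x 0 i0 * y 0 i3 + x 0 i3 * y 0 i0 + x 0 i3 * y 0 i3).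
Proof.
apply: eq5; rewrite /pi2_mul comp_sum.
all: under eq_bigr => i _ do rewrite comp_sum.
all: under eq_bigr => i _ do under eq_bigr => j _ do rewrite mxE tabE.
all: rewrite !big_ord_recl !big_ord0 /= !l4 !l3 !l2 !l1 !l0.
all: rewrite ?mk5_0 ?mk5_1 ?mk5_2 ?mk5_3 ?mk5_4; ring.
Qed.

Lemma two_neq0 : (2%:R : CC) != 0.
Proof. rewrite /CC. by rewrite (@pnatr_eq0 (complex Rdefinitions.R) 2). Qed.
Lemma three_neq0 : (3%:R : CC) != 0.
Proof. rewrite /CC. by rewrite (@pnatr_eq0 (complex Rdefinitions.R) 3). Qed.

Ltac comps := rewrite ?mk5_0 ?mk5_1 ?mk5_2 ?mk5_3 ?mk5_4.

Lemma addE a b c d e a' b' c' d' e' :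
  mk5 a b c d e + mk5 a' b' c' d' e' = mk5 (a + a') (b + b') (c + c') (d + d') (e + e').
Proof. by apply: eq5; rewrite !mxE. Qed.
Lemma scaleE k a b c d e : k *: mk5 a b c d e = mk5 (k * a) (k * b) (k * c) (k * d) (k * e).
Proof. by apply: eq5; rewrite !mxE. Qed.
Lemma oppE a b c d e a' b' c' d' e' :
  mk5 a b c d e - mk5 a' b' c' d' e' = mk5 (a - a') (b - b') (c - c') (d - d') (e - e').
Proof. by apply: eq5; rewrite !mxE. Qed.

Definition e0 : 'rV[CC]_5 := locked (mk5 1 0 0 0 0).
Definition e1 : 'rV[CC]_5 := locked (mk5 0 1 0 0 0).
Definition e2 : 'rV[CC]_5 := locked (mk5 0 0 1 0 0).
Definition e3 : 'rV[CC]_5 := locked (mk5 0 0 0 1 0).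
Definition e4 : 'rV[CC]_5 := locked (mk5 0 0 0 0 1).

Lemma e0_0 : e0 0 i0 = 1. Proof. by rewrite /e0 -lock mxE. Qed.
Lemma e0_1 : e0 0 i1 = 0. Proof. by rewrite /e0 -lock mxE. Qed.
Lemma e0_2 : e0 0 i2 = 0. Proof. by rewrite /e0 -lock mxE. Qed.
Lemma e0_3 : e0 0 i3 = 0. Proof. by rewrite /e0 -lock mxE. Qed.
Lemma e0_4 : e0 0 i4 = 0. Proof. by rewrite /e0 -lock mxE. Qed.
Lemma e1_0 : e1 0 i0 = 0. Proof. by rewrite /e1 -lock mxE. Qed.
Lemma e1_1 : e1 0 i1 = 1. Proof. by rewrite /e1 -lock mxE. Qed.
Lemma e1_2 : e1 0 i2 = 0. Proof. by rewrite /e1 -lock mxE. Qed.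
Lemma e1_3 : e1 0 i3 = 0. Proof. by rewrite /e1 -lock mxE. Qed.
Lemma e1_4 : e1 0 i4 = 0. Proof. by rewrite /e1 -lock mxE. Qed.
Lemma e2_0 : e2 0 i0 = 0. Proof. by rewrite /e2 -lock mxE. Qed.
Lemma e2_1 : e2 0 i1 = 0. Proof. by rewrite /e2 -lock mxE. Qed.
Lemma e2_2 : e2 0 i2 = 1. Proof. by rewrite /e2 -lock mxE. Qed.
Lemma e2_3 : e2 0 i3 = 0. Proof. by rewrite /e2 -lock mxE. Qed.
Lemma e2_4 : e2 0 i4 = 0. Proof. by rewrite /e2 -lock mxE. Qed.
Lemma e3_0 : e3 0 i0 = 0. Proof. by rewrite /e3 -lock mxE. Qed.
Lemma e3_1 : e3 0 i1 = 0. Proof. by rewrite /e3 -lock mxE. Qed.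
Lemma e3_2 : e3 0 i2 = 0. Proof. by rewrite /e3 -lock mxE. Qed.
Lemma e3_3 : e3 0 i3 = 1. Proof. by rewrite /e3 -lock mxE. Qed.
Lemma e3_4 : e3 0 i4 = 0. Proof. by rewrite /e3 -lock mxE. Qed.
Lemma e4_0 : e4 0 i0 = 0. Proof. by rewrite /e4 -lock mxE. Qed.
Lemma e4_1 : e4 0 i1 = 0. Proof. by rewrite /e4 -lock mxE. Qed.
Lemma e4_2 : e4 0 i2 = 0. Proof. by rewrite /e4 -lock mxE. Qed.
Lemma e4_3 : e4 0 i3 = 0. Proof. by rewrite /e4 -lock mxE. Qed.
Lemma e4_4 : e4 0 i4 = 1. Proof. by rewrite /e4 -lock mxE. Qed.

Ltac ecomps := rewrite ?e0_0 ?e0_1 ?e0_2 ?e0_3 ?e0_4 ?e1_0 ?e1_1 ?e1_2 ?e1_3 ?e1_4 ?e2_0 ?e2_1 ?e2_2 ?e2_3 ?e2_4 ?e3_0 ?e3_1 ?e3_2 ?e3_3 ?e3_4 ?e4_0 ?e4_1 ?e4_2 ?e4_3 ?e4_4.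

Lemma decomp (x : 'rV[CC]_5) : x = x 0 i0 *: e0 + x 0 i1 *: e1 + x 0 i2 *: e2 + x 0 i3 *: e3 + x 0 i4 *: e4.
Proof. rewrite /e0 /e1 /e2 /e3 /e4 -!lock !scaleE !addE; apply: eq5; comps; ring. Qed.

Section Lin.
Variable f : 'rV[CC]_5 -> 'rV[CC]_5.
Hypothesis hf : is_linear_map f.
Lemma lin0 : f 0 = 0.
Proof. have := hf 1 0 0; rewrite !scale1r addr0 => H. by apply: (addrI (f 0)); rewrite addr0 -H. Qed.
Lemma linD u v : f (u + v) = f u + f v.
Proof. by have := hf 1 u v; rewrite !scale1r. Qed.
Lemma linZ a u : f (a *: u) = a *: f u.
Proof. by have := hf a u 0; rewrite !addr0 lin0 addr0. Qed.
Lemma linB u v : f (u - v) = f u - f v.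
Proof. by rewrite -scaleN1r linD linZ scaleN1r. Qed.
End Lin.

Lemma solve2 (u v l r : CC) : l = r -> u - v = r - l -> u = v.
Proof. move=> ->; rewrite subrr => /eqP; rewrite subr_eq0 => /eqP. done. Qed.

Lemma comb1 (u v l r : CC) k : l = r -> u - v = k * (l - r) -> u = v.
Proof. move=> ->; rewrite subrr mulr0 => /eqP; rewrite subr_eq0 => /eqP. done. Qed.
Lemma comb2 (u v l r l' r' : CC) k k' : l = r -> l' = r' ->
  u - v = k * (l - r) + k' * (l' - r') -> u = v.
Proof. move=> -> ->; rewrite !subrr !mulr0 addr0 => /eqP; rewrite subr_eq0 => /eqP. done. Qed.

Lemma der_facts D : is_derivation D ->
  let a0 := D e0 0 i0 in let a3 := D e0 0 i3 in
  [/\ D e1 = mk5 0 (2%:R * a0) (2%:R * D e0 0 i1) 0 (2%:R * a3),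
      D e2 = mk5 0 0 (3%:R * a0) 0 0,
      [/\ D e3 0 i0 = 0, D e3 0 i1 = 0 & D e3 0 i3 = a0 + a3] &
      D e4 = mk5 0 0 0 0 (2%:R * (a0 + a3))].
Proof.
move=> [hl hd] a0 a3.
have E1 : e1 = pi2_mul e0 e0 by rewrite pi2_mulE; apply: eq5; comps; ecomps; ring.
have E2 : e2 = pi2_mul e0 e1 by rewrite pi2_mulE; apply: eq5; comps; ecomps; ring.
have E4 : e4 = pi2_mul e0 e3 by rewrite pi2_mulE; apply: eq5; comps; ecomps; ring.
have E4' : e4 = pi2_mul e3 e3 by rewrite pi2_mulE; apply: eq5; comps; ecomps; ring.
have D1 : D e1 = mk5 0 (2%:R * a0) (2%:R * D e0 0 i1) 0 (2%:R * a3).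
  rewrite E1 hd !pi2_mulE addE; apply: eq5; comps; ecomps; rewrite /a0 /a3; ring.
have D2 : D e2 = mk5 0 0 (3%:R * a0) 0 0.
  rewrite E2 hd !pi2_mulE D1 addE; apply: eq5; comps; ecomps; rewrite /a0 /a3; ring.
have H4 := hd e0 e3; have H4' := hd e3 e3.
rewrite -E4 in H4; rewrite -E4' in H4'.
rewrite H4 !pi2_mulE !addE in H4'.
have c1 := congr1 (fun v : 'rV[CC]_5 => v 0 i1) H4'.
have c2 := congr1 (fun v : 'rV[CC]_5 => v 0 i2) H4'.
have c4 := congr1 (fun v : 'rV[CC]_5 => v 0 i4) H4'.
move: c1 c2 c4 => /=; comps; ecomps.
rewrite !mulr0 !mulr1 !mul1r !mul0r !add0r !addr0 => c1 c2 c4.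
have b0 : D e3 0 i0 = 0 by rewrite c1.
have b1 : D e3 0 i1 = 0 by rewrite c2.
have b3 : D e3 0 i3 = a0 + a3.
  by apply: (solve2 c4); rewrite ?b0 /a0 /a3; ring.
split => //.
rewrite H4 !pi2_mulE addE; apply: eq5; comps; ecomps; rewrite ?b0 ?b1 ?b3 /a0 /a3; ring.
Qed.

Record good (A : 'M[CC]_5) : Prop := Good {
  g10 : A i1 i0 = 0; g13 : A i1 i3 = 0;
  g20 : A i2 i0 = 0; g21 : A i2 i1 = 0; g23 : A i2 i3 = 0; g24 : A i2 i4 = 0;
  g30 : A i3 i0 = 0; g31 : A i3 i1 = 0; g33 : A i3 i3 = A i0 i0 + A i0 i3;
  g40 : A i4 i0 = 0; g41 : A i4 i1 = 0; g42 : A i4 i2 = 0; g43 : A i4 i3 = 0;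
  g44 : A i4 i4 = A i1 i1 + A i1 i4 }.

Lemma mulE (x : 'rV[CC]_5) (A : 'M[CC]_5) j :
  (x *m A) 0 j = x 0 i0 * A i0 j + x 0 i1 * A i1 j + x 0 i2 * A i2 j + x 0 i3 * A i3 j + x 0 i4 * A i4 j.
Proof. rewrite mxE !big_ord_recl big_ord0 /= !l4 !l3 !l2 !l1 !l0; ring. Qed.

Definition matN (N : 'rV[CC]_5 -> 'rV[CC]_5) : 'M[CC]_5 :=
  \matrix_(i < 5, j < 5) [:: N e0 0 j; N e1 0 j; N e2 0 j; N e3 0 j; N e4 0 j]`_i.

Lemma matNE N : [/\ forall j, matN N i0 j = N e0 0 j, forall j, matN N i1 j = N e1 0 j,
  forall j, matN N i2 j = N e2 0 j, forall j, matN N i3 j = N e3 0 j &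
  forall j, matN N i4 j = N e4 0 j].
Proof. by split => j; rewrite mxE. Qed.

Lemma compD (u v : 'rV[CC]_5) j : (u + v) 0 j = u 0 j + v 0 j.
Proof. by rewrite !mxE. Qed.
Lemma compZ a (u : 'rV[CC]_5) j : (a *: u) 0 j = a * u 0 j.
Proof. by rewrite !mxE. Qed.

Lemma comp5sum a0 a1 a2 a3 a4 (v0 v1 v2 v3 v4 : 'rV[CC]_5) j :
  (a0 *: v0 + a1 *: v1 + a2 *: v2 + a3 *: v3 + a4 *: v4) 0 j =
  a0 * v0 0 j + a1 * v1 0 j + a2 * v2 0 j + a3 * v3 0 j + a4 * v4 0 j.
Proof. by rewrite !compD !compZ. Qed.

Lemma lin_mat N : is_linear_map N -> forall x, N x = x *m matN N.
Proof.
move=> hN x.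
have -> : N x = x 0 i0 *: N e0 + x 0 i1 *: N e1 + x 0 i2 *: N e2 + x 0 i3 *: N e3 + x 0 i4 *: N e4.
  by rewrite {1}(decomp x) !(linD hN) !(linZ hN).
case: (matNE N) => m0 m1 m2 m3 m4.
apply: eq5; rewrite !mulE !m0 !m1 !m2 !m3 !m4 !comp5sum; ring.
Qed.

Lemma compB (u v : 'rV[CC]_5) j : (u - v) 0 j = u 0 j - v 0 j.
Proof. by rewrite !mxE. Qed.

Lemma loc_good N : is_local_derivation N -> good (matN N).
Proof.
move=> [hN hL].
case: (matNE N) => m0 m1 m2 m3 m4.
have [D1 [hD1 E1]] := hL e1; have [F1 _ _ _] := der_facts hD1.
have [D2 [hD2 E2]] := hL e2; have [_ F2 _ _] := der_facts hD2.
have [D3 [hD3 E3]] := hL e3; have [_ _ [F3a F3b _] _] := der_facts hD3.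
have [D4 [hD4 E4]] := hL e4; have [_ _ _ F4] := der_facts hD4.
rewrite F1 in E1; rewrite F2 in E2; rewrite F4 in E4.
have [D5 [hD5 E5]] := hL (e0 - e3); have [_ _ [G3a _ G3c] _] := der_facts hD5.
rewrite (linB hN) (linB hD5.1) in E5.
have E50 := congr1 (fun v : 'rV[CC]_5 => v 0 i0) E5.
have E53 := congr1 (fun v : 'rV[CC]_5 => v 0 i3) E5.
move: E50 E53 => /=; rewrite !compB G3a G3c E3 F3a => E50 E53.
have [D6 [hD6 E6]] := hL (e1 - e4); have [H1 _ _ H4] := der_facts hD6.
rewrite (linB hN) (linB hD6.1) H1 H4 oppE in E6.
have E61 := congr1 (fun v : 'rV[CC]_5 => v 0 i1) E6.
have E64 := congr1 (fun v : 'rV[CC]_5 => v 0 i4) E6.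
move: E61 E64 => /=; rewrite !compB; comps; rewrite E4; comps => E61 E64.
constructor; rewrite ?m0 ?m1 ?m2 ?m3 ?m4 ?E1 ?E2 ?E3 ?E4; comps; rewrite ?F3a ?F3b //.
- by apply: (comb2 (k:=-1) (k':=-1) E50 E53); ring.
- by rewrite E1 in E61 E64; move: E61 E64; comps => E61 E64; apply: (comb2 (k:=-1) (k':=-1) E61 E64); ring.
Qed.

Definition Dmat (a0 a1 a2 a3 a4 b2 b4 : CC) (x : 'rV[CC]_5) : 'rV[CC]_5 :=
  mk5 (x 0 i0 * a0) (x 0 i0 * a1 + 2%:R * x 0 i1 * a0)
      (x 0 i0 * a2 + 2%:R * x 0 i1 * a1 + 3%:R * x 0 i2 * a0 + x 0 i3 * b2)
      (x 0 i0 * a3 + x 0 i3 * (a0 + a3))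
      (x 0 i0 * a4 + 2%:R * x 0 i1 * a3 + x 0 i3 * b4 + 2%:R * x 0 i4 * (a0 + a3)).

Lemma Dmat_der a0 a1 a2 a3 a4 b2 b4 : is_derivation (Dmat a0 a1 a2 a3 a4 b2 b4).
Proof.
split.
- move=> a x y; rewrite /Dmat scaleE addE; apply: eq5; comps; rewrite !compD !compZ; ring.
- move=> x y; rewrite /Dmat !pi2_mulE addE; apply: eq5; comps; ring.
Qed.

Lemma good_loc A : good A -> is_local_derivation (fun x => x *m A).
Proof.
case=> g10 g13 g20 g21 g23 g24 g30 g31 g33 g40 g41 g42 g43 g44.
split.
  by move=> a x y; rewrite mulmxDl scalemxAl.
move=> x.
have h2 := two_neq0; have h3 := three_neq0.
have [h0|h0] := eqVneq (x 0 i0) 0; last first.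
  exists (Dmat (A i0 i0) (A i0 i1 + x 0 i1 * (A i1 i1 - 2%:R * A i0 i0) / x 0 i0)
     (((x *m A) 0 i2 - 2%:R * x 0 i1 * (A i0 i1 + x 0 i1 * (A i1 i1 - 2%:R * A i0 i0) / x 0 i0)
        - 3%:R * x 0 i2 * A i0 i0) / x 0 i0)
     (A i0 i3)
     (((x *m A) 0 i4 - 2%:R * x 0 i1 * A i0 i3 - 2%:R * x 0 i4 * (A i0 i0 + A i0 i3)) / x 0 i0)
     0 0).
  split; first exact: Dmat_der.
  rewrite /Dmat; apply: eq5; comps; rewrite !mulE ?g10 ?g13 ?g20 ?g21 ?g23 ?g24 ?g30 ?g31 ?g33 ?g40 ?g41 ?g42 ?g43 ?g44;
    field; done.
have [h3'|h3'] := eqVneq (x 0 i3) 0; last first.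
  exists (Dmat (A i1 i1 / 2%:R) 0 0 (A i0 i0 + A i0 i3 - A i1 i1 / 2%:R) 0
     (((x *m A) 0 i2 - 3%:R * x 0 i2 * (A i1 i1 / 2%:R)) / x 0 i3)
     (((x *m A) 0 i4 - 2%:R * x 0 i1 * (A i0 i0 + A i0 i3 - A i1 i1 / 2%:R)
        - 2%:R * x 0 i4 * (A i0 i0 + A i0 i3)) / x 0 i3)).
  split; first exact: Dmat_der.
  rewrite /Dmat; apply: eq5; comps; rewrite !mulE ?g10 ?g13 ?g20 ?g21 ?g23 ?g24 ?g30 ?g31 ?g33 ?g40 ?g41 ?g42 ?g43 ?g44 h0;
    field; done.
have [h1|h1] := eqVneq (x 0 i1) 0; last first.
  exists (Dmat (A i1 i1 / 2%:R)
     ((x 0 i1 * A i1 i2 + x 0 i2 * A i2 i2 - 3%:R * x 0 i2 * (A i1 i1 / 2%:R)) / (2%:R * x 0 i1))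
     0 (A i1 i4 / 2%:R) 0 0 0).
  split; first exact: Dmat_der.
  rewrite /Dmat; apply: eq5; comps; rewrite !mulE ?g10 ?g13 ?g20 ?g21 ?g23 ?g24 ?g30 ?g31 ?g33 ?g40 ?g41 ?g42 ?g43 ?g44 h0 h3';
    field; rewrite ?mulf_neq0 //.
exists (Dmat (A i2 i2 / 3%:R) 0 0 ((A i1 i1 + A i1 i4) / 2%:R - A i2 i2 / 3%:R) 0 0 0).
split; first exact: Dmat_der.
rewrite /Dmat; apply: eq5; comps; rewrite !mulE ?g10 ?g13 ?g20 ?g21 ?g23 ?g24 ?g30 ?g31 ?g33 ?g40 ?g41 ?g42 ?g43 ?g44 h0 h3' h1;
  field; done.
Qed.

Lemma mmE (B A : 'M[CC]_5) i j :
  (B *m A) i j = B i i0 * A i0 j + B i i1 * A i1 j + B i i2 * A i2 j + B i i3 * A i3 j + B i i4 * A i4 j.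
Proof. rewrite mxE !big_ord_recl big_ord0 /= !l4 !l3 !l2 !l1 !l0; ring. Qed.

Lemma subE (B A : 'M[CC]_5) i j : (B - A) i j = B i j - A i j.
Proof. by rewrite !mxE. Qed.

Lemma good_br A B : good A -> good B -> good (B *m A - A *m B).
Proof.
case=> a10 a13 a20 a21 a23 a24 a30 a31 a33 a40 a41 a42 a43 a44.
case=> b10 b13 b20 b21 b23 b24 b30 b31 b33 b40 b41 b42 b43 b44.
constructor; rewrite !subE !mmE ?a10 ?a13 ?a20 ?a21 ?a23 ?a24 ?a30 ?a31 ?a33 ?a40 ?a41 ?a42 ?a43 ?a44
  ?b10 ?b13 ?b20 ?b21 ?b23 ?b24 ?b30 ?b31 ?b33 ?b40 ?b41 ?b42 ?b43 ?b44; ring.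
Qed.

Lemma loc_ext (f g : 'rV[CC]_5 -> 'rV[CC]_5) : is_local_derivation f -> (forall x, g x = f x) -> is_local_derivation g.
Proof.
move=> [hl hL] e; split.
  by move=> a x y; rewrite !e hl.
by move=> x; have [D [hD E]] := hL x; exists D; rewrite e.
Qed.

Unset Implicit Arguments.
Theorem theorem6p2 :
  forall N M : 'rV[CC]_5 -> 'rV[CC]_5,
    is_local_derivation N -> is_local_derivation M ->
    is_local_derivation (bracket N M).
Proof.
move=> N M hN hM.
have eN := lin_mat hN.1; have eM := lin_mat hM.1.
apply: (loc_ext (good_loc (good_br (loc_good hN) (loc_good hM)))).
move=> x; rewrite /bracket eN eM eN eM -!mulmxA mulmxBr.
done.
Qed.
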